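(* Let $\Gamma=(V,E)$ be a graph and $x,y\in V$. If perfect state transfer occurs from $d^*e_x$ to $d^*e_y$ on $\Gamma$, then $\mathrm{Aut}(\Gamma)_x=\mathrm{Aut}(\Gamma)_y$.
   Context: All graphs are finite and simple. $\mathcal{A}$ is the set of symmetric arcs of $\Gamma$, $t((x,y))=y$, $(x,y)^{-1}=(y,x)$. The boundary matrix is $d_{x,a}=\frac{1}{\sqrt{\deg x}}\delta_{x,t(a)}$; $R_{a,b}=\delta_{a,b^{-1}}$; $U=R(2d^*d-I_{\mathcal{A}})$; $e_x$ is the standard unit vector of $\mathbb{C}^V$. Perfect state transfer from $\Phi$ to a distinct state $\Psi$ means $U^\tau\Phi=\gamma\Psi$ for some $\tau\in\mathbb{Z}_{\ge1}$ and $\gamma\in\mathbb{C}$ with $|\gamma|=1$. $\mathrm{Aut}(\Gamma)$ is the automorphism group of $\Gamma$ and $\mathrm{Aut}(\Gamma)_x=\{g\in\mathrm{Aut}(\Gamma)\mid g(x)=x\}$. *)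

(* Defs.v *)
From mathcomp Require Import all_boot all_order all_algebra all_fingroup all_field.
Set Implicit Arguments. Unset Strict Implicit. Unset Printing Implicit Defensive.
Import Order.TTheory GRing.Theory Num.Theory.
Local Open Scope ring_scope.

Section Walk.
Variables (V : finType) (e : rel V).

Definition arc := {p : V * V | e p.1 p.2}.

Definition arc_t (a : arc) : V := (val a).2.

Definition deg (x : V) : nat := #|[set y | e x y]|.

Definition bdry (x : V) (a : arc) : algC :=
  (sqrtC (deg x)%:R)^-1 * (x == arc_t a)%:R.

Definition bdry_adj (a : arc) (x : V) : algC := (bdry x a)^*.

Definition dsd (a b : arc) : algC := \sum_(x : V) bdry_adj a x * bdry x b.

Definition Rmat (a b : arc) : algC :=
  (val a == ((val b).2, (val b).1))%:R.

Definition Umat (a b : arc) : algC :=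
  \sum_(c : arc) Rmat a c * (2 * dsd c b - (c == b)%:R).

Definition applyU (psi : arc -> algC) : arc -> algC :=
  fun a => \sum_(b : arc) Umat a b * psi b.

Definition dstar_e (x : V) : arc -> algC :=
  fun a => \sum_(z : V) bdry_adj a z * (z == x)%:R.

Definition PST (Phi Psi : arc -> algC) : Prop :=
  (exists a, Phi a != Psi a) /\
  exists (tau : nat) (gamma : algC), (0 < tau)%N /\ `|gamma| = 1 /\
    forall a, iter tau applyU Phi a = gamma * Psi a.

Definition is_aut (g : {perm V}) : bool :=
  [forall u, forall v, e (g u) (g v) == e u v].

Definition Aut_stab (x : V) : {set {perm V}} :=
  [set g : {perm V} | is_aut g && (g x == x)].

End Walk.

(* Main.v *)
Require Import Defs.
From mathcomp Require Import all_boot all_order all_algebra all_fingroup all_field.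
From mathcomp Require Import ring.
From Stdlib Require Import FunctionalExtensionality.
Set Implicit Arguments. Unset Strict Implicit. Unset Printing Implicit Defensive.
Import Order.TTheory GRing.Theory Num.Theory.
Local Open Scope ring_scope.

Section Aux.
Variables (V : finType) (e : rel V) (e_sym : symmetric e).

Definition rr (v : V) : algC := (sqrtC (deg e v)%:R)^-1.

Lemma rr_conj v : (rr v)^* = rr v.
Proof. by rewrite conj_Creal // ger0_real // invr_ge0 sqrtC_ge0 ler0n. Qed.

Lemma rr_sq v : rr v * rr v = ((deg e v)%:R)^-1.
Proof. by rewrite /rr -invfM -expr2 sqrtCK. Qed.

Lemma dstarE v (a : Defs.arc e) :
  @dstar_e V e v a = (v == arc_t a)%:R * rr v.
Proof.
rewrite /dstar_e (bigD1 v) //= eqxx mulr1 big1 ?addr0; last first.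
  by move=> z /negbTE ->; rewrite mulr0.
by rewrite /bdry_adj /bdry rmorphM /= rr_conj rmorph_nat mulrC.
Qed.

Lemma dsdE (a b : Defs.arc e) :
  dsd a b = (arc_t a == arc_t b)%:R * ((deg e (arc_t a))%:R)^-1.
Proof.
rewrite /dsd (bigD1 (arc_t a)) //= big1 ?addr0; last first.
  by move=> z /negbTE Hz; rewrite /bdry_adj /bdry Hz mulr0 rmorph0 mul0r.
rewrite /bdry_adj /bdry eqxx mulr1 rr_conj -/(rr _) mulrA rr_sq mulrC.
done.
Qed.

Definition rev (a : Defs.arc e) : Defs.arc e :=
  exist (fun p => e p.1 p.2) ((val a).2, (val a).1)
    (etrans (e_sym _ _) (valP a)).

Lemma revK a : rev (rev a) = a.
Proof. by apply: val_inj; case: a => [[u v] h]. Qed.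

Definition applyC (psi : Defs.arc e -> algC) (a : Defs.arc e) : algC :=
  \sum_b (2 * dsd a b - (a == b)%:R) * psi b.

Lemma applyUE psi a : applyU psi a = applyC psi (rev a).
Proof.
rewrite /applyU /applyC; apply: eq_bigr => b _.
rewrite /Umat (bigD1 (rev a)) //= big1 ?addr0; last first.
  move=> c Hc; rewrite /Rmat.
  case: eqP => [H|]; last by rewrite mul0r.
  case/eqP: Hc; apply: val_inj; rewrite /= H /=.
  by case: (val c).
rewrite /Rmat /=. case: a => [[u v] h] /=. by rewrite eqxx mul1r.
Qed.

Lemma card_in v : #|[set b : Defs.arc e | arc_t b == v]| = deg e v.
Proof.
rewrite -(@card_in_imset _ _ (fun b : Defs.arc e => (val b).1)); last first.
  move=> a b; rewrite !inE /arc_t => /eqP Ha /eqP Hb H.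
  apply: val_inj. case: (val a) Ha H => ??; case: (val b) Hb => ?? /= -> -> -> //.
rewrite /deg; apply: eq_card => u; rewrite [in RHS]inE.
apply/imsetP/idP.
  case=> b; rewrite inE /arc_t => /eqP <- ->. by rewrite e_sym (valP b).
move=> H.
have H' : e (u, v).1 (u, v).2 by rewrite /= e_sym.
exists (exist (fun p => e p.1 p.2) (u, v) H') => //.
by rewrite inE.
Qed.

Lemma deg_pos (a : Defs.arc e) : (deg e (arc_t a))%:R != 0 :> algC.
Proof.
rewrite pnatr_eq0 -card_in; apply/eqP => /eqP; rewrite cards_eq0 => /eqP H.
have : a \in [set b : Defs.arc e | arc_t b == arc_t a] by rewrite inE.
by rewrite H inE.
Qed.

Lemma applyCE psi a : applyC psi a =
  2 * ((deg e (arc_t a))%:R)^-1 * \sum_(b | arc_t b == arc_t a) psi b - psi a.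
Proof.
rewrite /applyC.
under eq_bigr => b _ do rewrite mulrBl.
rewrite sumrB; congr (_ - _); last first.
  rewrite (bigD1 a) //= eqxx mul1r big1 ?addr0 //.
  by move=> b /negbTE; rewrite eq_sym => ->; rewrite mul0r.
rewrite [in RHS]big_mkcond /= mulr_sumr; apply: eq_bigr => b _.
rewrite dsdE eq_sym; case: eqP => _; first by rewrite mul1r.
by rewrite mul0r mulr0 mul0r mulr0.
Qed.

Lemma applyCC psi : applyC (applyC psi) = psi.
Proof.
apply: functional_extensionality => a.
rewrite applyCE.
set S := \sum_(b | arc_t b == arc_t a) psi b.
set d := (deg e (arc_t a))%:R : algC.
have -> : \sum_(b | arc_t b == arc_t a) applyC psi b
   = \sum_(b | arc_t b == arc_t a) (2 * d^-1 * S - psi b).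
  by apply: eq_bigr => b /eqP Hb; rewrite applyCE Hb.
rewrite sumrB applyCE -/S -/d.
have -> : \sum_(b : Defs.arc e | arc_t b == arc_t a) (2 * d^-1 * S) = 2 * d^-1 * S * d.
  rewrite (eq_bigl (mem [set b : Defs.arc e | arc_t b == arc_t a])); last first.
    by move=> b; rewrite /= in_set.
  by rewrite sumr_const card_in mulr_natr.
have := deg_pos a; rewrite -/d => Hd.
field. done.
Qed.

Lemma applyU_inj (p q : Defs.arc e -> algC) : applyU p = applyU q -> p = q.
Proof.
move=> H.
have HC : applyC p = applyC q.
  apply: functional_extensionality => a.
  by rewrite -(revK a) -!applyUE H.
by rewrite -(applyCC p) HC applyCC.
Qed.

Lemma iterU_inj n (p q : Defs.arc e -> algC) : iter n (@applyU V e) p = iter n (@applyU V e) q -> p = q.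
Proof.
elim: n p q => [//|n IH] p q /=.
by move/applyU_inj/IH.
Qed.

Lemma applyU0 : applyU (fun _ : Defs.arc e => 0) = (fun _ => 0).
Proof.
apply: functional_extensionality => a; rewrite /applyU big1 // => b _; exact: mulr0.
Qed.

Lemma iterU0 n : iter n (@applyU V e) (fun _ => 0) = (fun _ => 0).
Proof. by elim: n => //= n ->; rewrite applyU0. Qed.

Variables (g : {perm V}) (hg : forall u v, e (g u) (g v) = e u v).

Definition garc (a : Defs.arc e) : Defs.arc e :=
  exist (fun p => e p.1 p.2) (g (val a).1, g (val a).2)
    (etrans (hg _ _) (valP a)).

Lemma garc_inj : injective garc.
Proof.
move=> a b H; apply: val_inj.
have := congr1 val H => /= [[/perm_inj H1 /perm_inj H2]].
by case: (val a) H1 H2 => ??; case: (val b) => ?? /= -> ->.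
Qed.

Lemma deg_g v : deg e (g v) = deg e v.
Proof.
rewrite /deg -[RHS](card_imset _ (@perm_inj _ g)); apply: eq_card => y.
rewrite [in LHS]inE -{1}(permKV g y) hg -{2}(permKV g y) mem_imset ?inE //.
exact: perm_inj.
Qed.

Lemma dsd_g a b : dsd (garc a) (garc b) = dsd a b.
Proof. by rewrite !dsdE /arc_t /= (inj_eq (@perm_inj _ g)) deg_g. Qed.

Lemma Rmat_g a c : Rmat (garc a) (garc c) = Rmat a c.
Proof.
rewrite /Rmat /=.
case: (val a) => ??; case: (val c) => ?? /=.
by rewrite !xpair_eqE !(inj_eq (@perm_inj _ g)).
Qed.

Lemma Umat_g a b : Umat (garc a) (garc b) = Umat a b.
Proof.
rewrite /Umat (reindex_inj garc_inj); apply: eq_bigr => c _.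
by rewrite Rmat_g dsd_g (inj_eq garc_inj).
Qed.

Lemma applyU_g psi : applyU (fun a => psi (garc a)) = (fun a => applyU psi (garc a)).
Proof.
apply: functional_extensionality => a.
rewrite /applyU [in RHS](reindex_inj garc_inj); apply: eq_bigr => b _.
by rewrite Umat_g.
Qed.

Lemma iterU_g n psi :
  iter n (@applyU V e) (fun a => psi (garc a)) = (fun a => iter n (@applyU V e) psi (garc a)).
Proof. by elim: n => //= n ->; rewrite applyU_g. Qed.

Lemma dstar_g v a : @dstar_e V e (g v) (garc a) = @dstar_e V e v a.
Proof. by rewrite !dstarE /rr deg_g /arc_t /= (inj_eq (@perm_inj _ g)). Qed.

Lemma key u a : @dstar_e V e u a != 0 -> @dstar_e V e u (garc a) = @dstar_e V e u a -> g u = u.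
Proof.
rewrite !dstarE => Hnz Heq.
have Hua : u = arc_t a.
  by apply/eqP; apply: contraNT Hnz => /negbTE ->; rewrite mul0r.
move: Hnz Heq; rewrite Hua eqxx mul1r => Hnz.
case: eqP => [H _|_]; last by move/esym/eqP; rewrite mul0r (negbTE Hnz).
by rewrite {2}H.
Qed.

End Aux.

Theorem corollary3p4 (V : finType) (e : rel V)
  (e_sym : symmetric e) (e_irr : irreflexive e) (x y : V) :
  PST (@dstar_e V e x) (@dstar_e V e y) -> Aut_stab e x = Aut_stab e y.
Proof.
case=> [[a0 Ha0] [tau [gamma [_ [Hg Hit]]]]].
have gnz : gamma != 0 by apply/eqP => H; move: Hg; rewrite H normr0 => /eqP; rewrite eq_sym oner_eq0.
have Hit' : iter tau (@applyU V e) (@dstar_e V e x) = (fun a => gamma * @dstar_e V e y a).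
  by apply: functional_extensionality.
have [ay Hay] : exists a, @dstar_e V e y a != 0.
  case: (boolP [exists a, @dstar_e V e y a != 0]) => [/existsP //|/existsPn H].
  have Hy : @dstar_e V e y = (fun _ => 0).
    by apply: functional_extensionality => a; move: (H a) => /negPn/eqP.
  have : iter tau (@applyU V e) (@dstar_e V e x) = iter tau (@applyU V e) (fun _ => 0).
    by rewrite iterU0 Hit' Hy; apply: functional_extensionality => a; rewrite mulr0.
  by move/(iterU_inj e_sym) => Hx; move: Ha0; rewrite Hx Hy eqxx.
have [ax Hax] : exists a, @dstar_e V e x a != 0.
  case: (boolP [exists a, @dstar_e V e x a != 0]) => [/existsP //|/existsPn H].
  have Hx : @dstar_e V e x = (fun _ => 0).
    by apply: functional_extensionality => a; move: (H a) => /negPn/eqP.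
  move: (Hit ay); rewrite Hx iterU0 => /esym/eqP; rewrite mulf_eq0 (negbTE gnz).
  by rewrite (negbTE Hay).
suff E : forall g : {perm V}, is_aut e g -> (g x == x) = (g y == y).
  by apply/setP => g; rewrite !inE; case Ha: (is_aut e g) => //=; apply: E.
move=> g /forallP Haut.
have hg : forall u v, e (g u) (g v) = e u v by move=> u v; apply/eqP; apply: (forallP (Haut u)).
apply/eqP/eqP => Hfix.
-
  have Hx : (fun a => @dstar_e V e x (garc hg a)) = @dstar_e V e x.
    by apply: functional_extensionality => a; rewrite -{1}Hfix dstar_g.
  apply: (@key _ _ _ hg _ _ Hay).
  move: (f_equal (fun f => f ay) (iterU_g hg tau (@dstar_e V e x))).
  rewrite Hx Hit' /= => /esym H.
  by apply: (mulfI gnz); rewrite -H.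
- have Hy : (fun a => @dstar_e V e y (garc hg a)) = @dstar_e V e y.
    by apply: functional_extensionality => a; rewrite -{1}Hfix dstar_g.
  have Hx : (fun a => @dstar_e V e x (garc hg a)) = @dstar_e V e x.
    apply: (@iterU_inj V e e_sym tau).
    rewrite iterU_g Hit'; apply: functional_extensionality => a.
    by move: (f_equal (fun f => f a) Hy) => /= ->.
  apply: (@key _ _ _ hg _ _ Hax).
  by move: (f_equal (fun f => f ax) Hx).
Qed.
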